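(* For every $m\ge0$ and $n\ge1$ there is an injective map from $Q_2(m,n)$ to $P_2(-m,n)$.
   Context: Partitions: $\lambda_1\ge\cdots\ge\lambda_\ell>0$, $\ell(\lambda)=\ell$, $\lambda_i=0$ for $i>\ell$ (so $\alpha_1=0$ if $\alpha=\emptyset$), $s(\lambda)$ the smallest part with $s(\emptyset)=+\infty$. Rank $=\lambda_1-\ell$; rank-set $=[-\lambda_1,1-\lambda_2,\dots,\ell-1-\lambda_\ell,\ell,\ell+1,\dots]$. $Q(m,n)$: partitions of $n$ whose rank-set contains $m$; $P(-m,n)$: partitions of $n$ with rank $\ge-m$. $m$-Durfee rectangle symbol $(\alpha,\beta)_{(m+j)\times j}$ of $\lambda$: $j\ge0$ is the largest integer with $\lambda_{m+j}\ge j$; $\alpha$ is the conjugate of $(\lambda_1-j,\dots,\lambda_{m+j}-j)$ (columns to the right of the $(m+j)\times j$ rectangle) and $\beta=(\lambda_{m+j+1},\lambda_{m+j+2},\dots)$ (rows below it); $|\lambda|=|\alpha|+|\beta|+j(m+j)$. $Q_2(m,n)$ is the set of $\lambda\in Q(m,n)$ whose symbol $(\alpha,\beta)_{(m+j)\times j}$ has $j\ge1$, $\ell(\beta)\ge\ell(\alpha)$ and $\alpha_1<m+j$. $P_2(-m,n)$ is the set of $\mu\in P(-m,n)$ whose symbol $(\gamma,\delta)_{(m+j')\times j'}$ has $j'\ge1$ and $\delta_1=j'-1$. *)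

(* Defs.v *)
From mathcomp Require Import all_boot all_order all_algebra.
Set Implicit Arguments. Unset Strict Implicit. Unset Printing Implicit Defensive.
Import GRing.Theory Num.Theory.
Local Open Scope ring_scope.
Local Open Scope nat_scope.

Definition is_partition (l : seq nat) : bool :=
  sorted geq l && all (fun x => 0 < x) l.

Definition partition_of (n : nat) (l : seq nat) : bool :=
  is_partition l && (sumn l == n).

(* lambda_i, 1-indexed, with lambda_i = 0 for i > l(lambda) *)
Definition part (l : seq nat) (i : nat) : nat := nth 0 l i.-1.

Definition rank (l : seq nat) : int := ((part l 1)%:Z - (size l)%:Z)%R.

(* z belongs to the rank-set [-l_1, 1-l_2, ..., ell-1-l_ell, ell, ell+1, ...] *)
Definition in_rank_set (z : int) (l : seq nat) : bool :=
  ((size l)%:Z <= z)%R ||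
  has (fun i => ((i%:Z - (part l i.+1)%:Z)%R == z)) (iota 0 (size l)).

(* Q(m,n) and P(-m,n) *)
Definition Qset (m n : nat) (l : seq nat) : bool :=
  partition_of n l && in_rank_set (Posz m) l.
Definition Pset (m n : nat) (l : seq nat) : bool :=
  partition_of n l && (- (Posz m) <= rank l)%R.

Definition conjugate (s : seq nat) : seq nat :=
  [seq count (fun x => k <= x) s | k <- iota 1 (foldr maxn 0 s)].

(* m-Durfee rectangle: j is the largest j >= 0 with lambda_{m+j} >= j
   (j = 0 always qualifies; any j >= 1 qualifying satisfies j <= l(lambda)). *)
Definition durfee_j (m : nat) (l : seq nat) : nat :=
  foldr maxn 0 [seq j <- iota 0 (size l).+1 | (j == 0) || (j <= part l (m + j))].

Definition durfee_alpha (m : nat) (l : seq nat) : seq nat :=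
  let j := durfee_j m l in
  conjugate [seq part l i - j | i <- iota 1 (m + j)].

Definition durfee_beta (m : nat) (l : seq nat) : seq nat :=
  drop (m + durfee_j m l) l.

(* first part, with alpha_1 = 0 for the empty partition *)
Definition first_part (s : seq nat) : nat := nth 0 s 0.

Definition Q2 (m n : nat) (l : seq nat) : bool :=
  [&& Qset m n l,
      1 <= durfee_j m l,
      size (durfee_alpha m l) <= size (durfee_beta m l) &
      first_part (durfee_alpha m l) < m + durfee_j m l].

Definition P2 (m n : nat) (mu : seq nat) : bool :=
  [&& Pset m n mu,
      1 <= durfee_j m mu &
      first_part (durfee_beta m mu) == (durfee_j m mu).-1].

(* Main.v *)
Require Import Defs.
From mathcomp Require Import all_boot all_order all_algebra.
From mathcomp Require Import zify.

Lemma geq_tr : transitive geq.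
Proof. by move=> y x z h1 h2; apply: leq_trans h2 h1. Qed.

Lemma fmax_ge s x : x \in s -> x <= foldr maxn 0 s.
Proof.
elim: s => //= y s IH; rewrite in_cons => /orP[/eqP->|/IH h]; first exact: leq_maxl.
exact: leq_trans h (leq_maxr _ _).
Qed.

Lemma fmax_le s k : all (fun x => x <= k) s -> foldr maxn 0 s <= k.
Proof. by elim: s => //= y s IH /andP[h1 h2]; rewrite geq_max h1 IH. Qed.

Lemma fmax_in s : s != [::] -> foldr maxn 0 s \in s.
Proof.
elim: s => //= y s IH _; case: s IH => [|z s] IH /=; first by rewrite maxn0 mem_seq1.
have H := IH isT; set M := maxn z _ in H *; rewrite in_cons.
case: (leqP y M) => h; last by rewrite eqxx.
by move: H => /= ->; rewrite orbT.
Qed.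

Lemma nth_anti l i k : sorted geq l -> i <= k -> nth 0 l k <= nth 0 l i.
Proof.
move=> sl ik; case: (ltnP k (size l)) => hk; last by rewrite nth_default.
have := sorted_leq_nth geq_tr (fun x => leqnn x) 0 sl; move/(_ i k).
rewrite !inE; apply=> //; exact: leq_ltn_trans ik hk.
Qed.

Lemma part_anti l i k : sorted geq l -> i <= k -> part l k <= part l i.
Proof. by move=> sl ik; apply: nth_anti => //; lia. Qed.

Lemma part_pos l k : 0 < part l k -> k.-1 < size l.
Proof.
move=> h; rewrite ltnNge; apply/negP => /(nth_default 0) e.
by rewrite /part e in h.
Qed.

Lemma le_head l y : sorted geq l -> y \in l -> y <= nth 0 l 0.
Proof. by move=> sl yl; rewrite -{1}(nth_index 0 yl); apply: nth_anti. Qed.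

Definition dlist m l := [seq j <- iota 0 (size l).+1 | (j == 0) || (j <= part l (m + j))].

Lemma durfee_props m l : sorted geq l ->
  [/\ durfee_j m l <= size l, (durfee_j m l = 0 \/ durfee_j m l <= part l (m + durfee_j m l))
   & part l (m + durfee_j m l + 1) <= durfee_j m l].
Proof.
move=> sl.
have : durfee_j m l \in dlist m l by apply: fmax_in; rewrite /dlist /=.
rewrite mem_filter mem_iota => /andP[/orP[/eqP h0|h1] /andP[_ h2]].
all: split; [lia| by [left|right] |].
all: rewrite leqNgt; apply/negP => hc.
all: have hs : (m + durfee_j m l + 1).-1 < size l by apply: part_pos; lia.
all: have : (durfee_j m l).+1 \in dlist m l by
   rewrite mem_filter mem_iota; apply/andP; split; [apply/orP; right; rewrite -addn1 -addnA in hc *; exact: hc| lia].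
all: move/fmax_ge; rewrite -/(durfee_j m l); lia.
Qed.

Lemma durfee_eq m l j : sorted geq l -> 1 <= j -> j <= size l ->
  j <= part l (m + j) -> part l (m + j + 1) <= j -> durfee_j m l = j.
Proof.
move=> sl j1 jl h1 h2; apply/eqP; rewrite eqn_leq; apply/andP; split.
  apply: fmax_le; apply/allP => x; rewrite mem_filter => /andP[/orP[/eqP->//|hx] _].
  rewrite leqNgt; apply/negP => hjx.
  have : part l (m + x) <= part l (m + j + 1) by apply: part_anti => //; lia.
  lia.
apply: fmax_ge; rewrite mem_filter mem_iota h1 orbT /=; lia.
Qed.

Lemma Q2_facts m n l : Q2 m n l ->
  [/\ partition_of n l /\ sorted geq l, 1 <= durfee_j m l,
      part l (m + durfee_j m l) = durfee_j m l,
      part l (m + durfee_j m l + 1) = durfee_j m l & part l 1 + m <= size l].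
Proof.
case/and4P => /andP[pl rs] j1 sab fpa.
have sl : sorted geq l by case/andP: pl => /andP[].
have [dsz [j0|jle] dmax] := durfee_props m l sl; first by rewrite j0 in j1.
move: sab fpa; rewrite /durfee_alpha /durfee_beta /first_part /conjugate.
set j := durfee_j m l in j1 dsz jle dmax *.
set s := [seq part l i - j | i <- iota 1 (m + j)].
set M := foldr maxn 0 s.
have i1 : 1 \in iota 1 (m + j) by rewrite mem_iota; lia.
have hM : part l 1 - j <= M by apply: fmax_ge; apply: map_f.
move=> sab fpa.
have [i ii hi] : exists2 i, i \in iota 1 (m + j) & part l i <= j.
  case EM: M => [|M'].
    by exists 1 => //; lia.
  move: fpa; rewrite EM /= => fpa.
  have : 0 < count (predC (fun x => 0 < x)) s.
    have := count_predC (fun x => 0 < x) s; rewrite size_map size_iota; lia.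
  rewrite -has_count => /hasP[x /mapP[i ii ->]] /=; rewrite -leqNgt => hx.
  by exists i => //; lia.
have hj : part l (m + j) = j.
  apply/eqP; rewrite eqn_leq jle andbT.
  apply: leq_trans hi; apply: part_anti => //; move: ii; rewrite mem_iota; lia.
have szl : (m + j).-1 < size l by apply: part_pos; lia.
have hj1 : part l (m + j + 1) = j.
  move: rs; rewrite /in_rank_set => /orP[|/hasP[k]].
    move=> h; exfalso; move: h; rewrite lez_nat; lia.
  rewrite mem_iota => /andP[_ hk] /eqP hk2.
  have hk3 : part l k.+1 + m = k by lia.
  case: (leqP k.+1 (m + j)) => hkm.
    have := part_anti _ _ _ sl hkm; lia.
  have := part_anti _ _ _ sl (_ : m + j + 1 <= k.+1); lia.
split => //.
have := part_anti _ _ _ sl (_ : 1 <= m + j); move: sab; rewrite size_map size_iota size_drop.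
have : (m + j + 1).-1 < size l by apply: part_pos; lia.
lia.
Qed.

Definition Pd (d : seq nat) : seq nat := [seq x.-1 | x <- [seq y <- d | 1 < y]].

Definition fmap m (l : seq nat) : seq nat :=
  (size l - m) :: take (m + durfee_j m l).-1 l ++ Pd (drop (m + durfee_j m l) l).

Lemma sumPd d : all (fun x => 0 < x) d -> sumn d = sumn (Pd d) + size d.
Proof.
elim: d => //= x d IH /andP[hx hd]; rewrite /Pd /=; case: ifP => h /=; rewrite -/(Pd d) IH //; lia.
Qed.

Lemma ones_filter d : all (fun x => x <= 1) d -> [seq y <- d | 1 < y] = [::].
Proof. by elim: d => //= x d IH /andP[hx hd]; rewrite ltnNge hx /= IH. Qed.

Lemma ones_nseq d : all (fun x => 0 < x) d -> all (fun x => x <= 1) d -> d = nseq (size d) 1.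
Proof.
elim: d => //= x d IH /andP[hx hd] /andP[hx' hd']; rewrite -IH //.
by have -> : x = 1 by lia.
Qed.

Lemma recon d : all (fun x => 0 < x) d -> pairwise geq d ->
  d = [seq x.+1 | x <- Pd d] ++ nseq (size d - size (Pd d)) 1.
Proof.
elim: d => //= x d IH /andP[hx hd] /andP[hxd pd]; rewrite /Pd /=; case: ifP => h /=.
  rewrite -/(Pd d) subSS -IH //; congr (_ :: _); lia.
have x1 : x = 1 by lia.
have hd1 : all (fun y => y <= 1) d.
  by apply/allP => y yd; have := allP hxd y yd; rewrite x1.
by rewrite ones_filter //= x1 -ones_nseq.
Qed.

Lemma headPd d j : nth 0 d 0 = j -> all (fun x => x <= j) d -> nth 0 (Pd d) 0 = j.-1.
Proof.
case: d => [|x d] /= <- //; rewrite /Pd /= leqnn /= => hd; case: ifP => h //=.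
rewrite ones_filter //; first by move: h; case: x hd => [|[|x]].
apply/allP => y yd; have := allP hd y yd; lia.
Qed.

Lemma decomp m l : let j := durfee_j m l in (m + j).-1 < size l -> 0 < m + j ->
  part l (m + j) = j ->
  l = take (m + j).-1 l ++ j :: drop (m + j) l.
Proof.
move=> j hs hp hj; rewrite -{1}(cat_take_drop (m + j).-1 l) (drop_nth 0 hs).
have -> : nth 0 l (m + j).-1 = j by exact: hj.
by rewrite prednK.
Qed.

Lemma fmap_prop m n l : Q2 m n l ->
  P2 m n (fmap m l) /\ durfee_j m (fmap m l) = durfee_j m l.
Proof.
move=> /Q2_facts [[pl sl] j1 hj hj1 hl1].
have hs : (m + durfee_j m l + 1).-1 < size l by apply: part_pos; lia.
have hs' : (m + durfee_j m l).-1 < size l by lia.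
have hp : 0 < m + durfee_j m l by lia.
have el := decomp m l hs' hp hj.
move: hs hs' el hj hj1 hl1 pl sl; rewrite /fmap.
set j := durfee_j m l in j1 *.
set a := (m + j).-1; set A := take a l; set D := drop (m + j) l.
move=> hs hs' el hj hj1 hl1 pl sl.
have ea : m + j = a.+1 by rewrite /a prednK //; lia.
have szA : size A = a by rewrite size_take hs'.
have szl : size l = a + 1 + size D by rewrite {1}el size_cat /= szA; lia.
have pwl : pairwise geq l by rewrite -(sorted_pairwise geq_tr).
move: (pwl); rewrite {1}el pairwise_cat pairwise_cons => /and3P[arl pwA /andP[aD pwD]].
have posl : all (fun x => 0 < x) l by move: pl; rewrite /partition_of /is_partition => /andP[/andP[]].
have hA : forall y, y \in A -> j <= y.
  by move=> y yA; have := allrelP arl y j yA; rewrite mem_head; apply.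
have hD : forall w, w \in D -> w <= j by move=> w wD; have := allP aD w wD.
have hmax : forall y, y \in l -> y <= size l - m.
  move=> y yl; have := le_head _ _ sl yl; rewrite /part /= in hl1; lia.
have hPd : forall z, z \in Pd D -> exists2 w, w \in D & z = w.-1 /\ 1 < w.
  by move=> z /mapP[w]; rewrite mem_filter => /andP[h1 h2] ->; exists w.
have posD : all (fun x => 0 < x) D by apply/allP => w /mem_drop wl; exact: allP posl w wl.
set mu := (size l - m) :: A ++ Pd D.
have smu : sorted geq mu.
  rewrite (sorted_pairwise geq_tr) /mu pairwise_cons pairwise_cat pwA /=.
  apply/and3P; split.
  - apply/allP => y; rewrite mem_cat => /orP[/mem_take|/hPd[w /mem_drop wl [-> _]]].
      exact: hmax.
    by have := hmax w wl; rewrite /=; lia.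
  - apply/allrelP => y z yA /hPd[w wD [-> _]]; have := hA y yA; have := hD w wD; rewrite /=; lia.
  - rewrite -(sorted_pairwise geq_tr) sorted_map.
    apply: (@sub_sorted _ geq); first by move=> x y /=; lia.
    by apply: sorted_filter; [exact: geq_tr| rewrite (sorted_pairwise geq_tr)].
have szPd : size (Pd D) <= size D by rewrite size_map size_filter count_size.
have h0 : nth 0 (Pd D) 0 = j.-1.
  apply: headPd; last by apply/allP.
  by rewrite /D nth_drop addn0; move: hj1; rewrite /part addn1.
have dmu : durfee_j m mu = j.
  apply: durfee_eq => //.
  - by rewrite /mu /= size_cat szA; lia.
  - rewrite /part ea /= /mu; case Ea: a => [|a'] /=; first lia.
    rewrite nth_cat szA Ea ltnSn /A nth_take ?Ea //.
    by have := nth_anti _ _ _ sl (leqnSn a'); move: hj; rewrite /part ea Ea /=; lia.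
  - by rewrite /part addn1 ea /= /mu /= nth_cat szA ltnn subnn h0; lia.
split => //.
apply/and3P; split; last first.
- by rewrite /durfee_beta /first_part dmu nth_drop ea addn0 /mu /= nth_cat szA ltnn subnn h0.
- by rewrite dmu.
apply/andP; split; last first.
  rewrite /rank /part /= size_cat szA; lia.
apply/andP; split.
  apply/andP; split => //; rewrite /mu /=.
  apply/andP; split; first lia.
  rewrite all_cat; apply/andP; split; apply/allP.
    by move=> y yA; have := hA y yA; lia.
  by move=> z /hPd[w _ [-> ?]]; lia.
have := sumPd _ posD; case/andP: pl => _ /eqP <-.
move=> hsum; apply/eqP; rewrite /mu /= sumn_cat {2}el sumn_cat /=; lia.
Qed.

Lemma drop_recon l k : is_partition l ->
  drop k l = [seq x.+1 | x <- Pd (drop k l)] ++ nseq (size (drop k l) - size (Pd (drop k l))) 1.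
Proof.
move=> /andP[sl pl]; apply: recon.
  by apply/allP => w /mem_drop wl; exact: allP pl w wl.
by rewrite -(sorted_pairwise geq_tr); apply: drop_sorted.
Qed.

Theorem lemma4p2 (m n : nat) : 1 <= n ->
  exists f : seq nat -> seq nat,
    (forall l, Q2 m n l -> P2 m n (f l)) /\
    (forall l1 l2, Q2 m n l1 -> Q2 m n l2 -> f l1 = f l2 -> l1 = l2).
Proof.
move=> _; exists (fmap m); split; first by move=> l /fmap_prop [].
move=> l1 l2 q1 q2 e.
have [_ d1] := fmap_prop _ _ _ q1; have [_ d2] := fmap_prop _ _ _ q2.
have ej : durfee_j m l1 = durfee_j m l2 by rewrite -d1 -d2 e.
have [[pl1 sl1] j11 hj1 hj11 hl11] := Q2_facts _ _ _ q1.
have [[pl2 sl2] j12 hj2 hj12 hl12] := Q2_facts _ _ _ q2.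
have hs1 : (m + durfee_j m l1 + 1).-1 < size l1 by apply: part_pos; lia.
have hs2 : (m + durfee_j m l2 + 1).-1 < size l2 by apply: part_pos; lia.
have hp1 : 0 < m + durfee_j m l1 by lia.
have hp2 : 0 < m + durfee_j m l2 by lia.
have hs1' : (m + durfee_j m l1).-1 < size l1 by lia.
have hs2' : (m + durfee_j m l2).-1 < size l2 by lia.
have el1 := decomp m l1 hs1' hp1 hj1.
have el2 := decomp m l2 hs2' hp2 hj2.
move: e el1 el2 hs1 hs2 {hs1' hs2' d1 d2}; rewrite /fmap -!ej.
set j := durfee_j m l1 in hj1 hj11 *.
case=> es ecat el1 el2 hs1 hs2.
have esz : size l1 = size l2 by lia.
have szA1 : size (take (m + j).-1 l1) = (m + j).-1 by rewrite size_take; case: ifP => //; lia.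
have szA2 : size (take (m + j).-1 l2) = (m + j).-1 by rewrite size_take; case: ifP => //; lia.
move: ecat => /eqP; rewrite eqseq_cat; last by rewrite szA1 szA2.
case/andP => /eqP eA /eqP eP.
rewrite el1 el2 eA; congr (_ ++ _ :: _).
have [ip1 _] := andP pl1; have [ip2 _] := andP pl2.
rewrite (drop_recon l1 (m + j) ip1) (drop_recon l2 (m + j) ip2).
by rewrite eP !size_drop esz.
Qed.
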